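(* Fix a point $\mathbf{x}'\in\Omega\subset\mathbb{R}^2$ and let $\mathbf{F}=[\mathbf{F}_1,\mathbf{F}_2]\in\mathbb{R}^{3\times 2}$ have $\operatorname{rank}(\mathbf{F})=2$. Set $$\mathbf{b}(\mathbf{F})=\frac{\mathbf{F}_1\times\mathbf{F}_2}{|\mathbf{F}_1\times\mathbf{F}_2|^2}\in\mathbb{R}^3 .$$ Then $$W_{str}(\mathbf{x}',\mathbf{F})=W_{3D}\big((\mathbf{x}',0),[\mathbf{F},\mathbf{b}(\mathbf{F})]\big),$$ where $[\mathbf{F},\mathbf{b}(\mathbf{F})]\in\mathbb{R}^{3\times3}$ is the matrix whose first two columns are those of $\mathbf{F}$ and whose third column is $\mathbf{b}(\mathbf{F})$.
   Context: Let $\Omega\subset\mathbb{R}^2$ be a bounded Lipschitz domain. At the point $\mathbf{x}'$ we are given scalars $s,s_0$ with $-1<s,s_0<\infty$ (values at $\mathbf{x}'$ of given functions $s,s_0\in L^\infty(\Omega)$) and a unit vector $\mathbf{m}\in\mathbb{S}^1\subset\mathbb{R}^2$ (the value at $\mathbf{x}'$ of the blueprinted director field). We identify $\mathbf{m}$ with $(\mathbf{m},0)^T\in\mathbb{R}^3$ whenever a vector in $\mathbb{R}^3$ is needed. Define $\lambda=\big(\tfrac{s+1}{s_0+1}\big)^{1/3}$. The 3D energy density. For $\mathbf{G}\in\mathbb{R}^{3\times3}$ with $\mathbf{G}\mathbf{m}\neq 0$, set $\mathbf{n}=\mathbf{G}\mathbf{m}/|\mathbf{G}\mathbf{m}|$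 and $$\mathbf{L}_{\mathbf{m}}=(s_0+1)^{-1/3}(\mathrm{Id}_3+s_0\,\mathbf{m}\otimes\mathbf{m}),\qquad \mathbf{L}_{\mathbf{n}}=(s+1)^{-1/3}(\mathrm{Id}_3+s\,\mathbf{n}\otimes\mathbf{n}).$$ Then $$W_{3D}\big((\mathbf{x}',0),\mathbf{G}\big)=\operatorname{tr}\big(\mathbf{G}^T\mathbf{L}_{\mathbf{n}}^{-1}\mathbf{G}\mathbf{L}_{\mathbf{m}}\big)-3 .$$ The stretching energy density. For $\mathbf{F}\in\mathbb{R}^{3\times2}$ of rank 2, let $\mathrm{I}(\mathbf{F})=\mathbf{F}^T\mathbf{F}$, $J(\mathbf{F})=\det\mathrm{I}(\mathbf{F})$ and $C_{\mathbf{m}}(\mathbf{F})=\mathbf{m}\cdot\mathrm{I}(\mathbf{F})\mathbf{m}$. Then $$W_{str}(\mathbf{x}',\mathbf{F})=\lambda\Big[\frac{1}{J(\mathbf{F})}+\frac{1}{s+1}\Big(\operatorname{tr}\mathrm{I}(\mathbf{F})+s_0\,C_{\mathbf{m}}(\mathbf{F})+s\,\frac{J(\mathbf{F})}{C_{\mathbf{m}}(\mathbf{F})}\Big)\Big]-3 .$$ *)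

(* Defs.v *)
From HB Require Import structures.
From mathcomp Require Import all_boot all_order all_algebra.
From mathcomp Require Import reals exp.
Set Implicit Arguments. Unset Strict Implicit. Unset Printing Implicit Defensive.
Import Order.TTheory GRing.Theory Num.Theory.
Local Open Scope ring_scope.

Section Defs.
Variable R : realType.

Definition i0 : 'I_2 := @Ordinal 2 0 isT.
Definition i1 : 'I_2 := @Ordinal 2 1 isT.

(* the planar director m : R^2 identified with (m,0)^T in R^3 *)
Definition embed3 (m : 'cV[R]_2) : 'cV[R]_3 :=
  \col_(i < 3) (if (i : nat) == 0%N then m i0 0
                else if (i : nat) == 1%N then m i1 0 else 0).

Definition vnorm (v : 'cV[R]_3) : R := Num.sqrt (\sum_i v i 0 ^+ 2).

Definition crossv (u v : 'cV[R]_3) : 'cV[R]_3 :=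
  \col_(i < 3)
    (if (i : nat) == 0%N then u (inord 1) 0 * v (inord 2) 0 - u (inord 2) 0 * v (inord 1) 0
     else if (i : nat) == 1%N then u (inord 2) 0 * v (inord 0) 0 - u (inord 0) 0 * v (inord 2) 0
     else u (inord 0) 0 * v (inord 1) 0 - u (inord 1) 0 * v (inord 0) 0).

Definition bvec (F : 'M[R]_(3,2)) : 'cV[R]_3 :=
  let c := crossv (col i0 F) (col i1 F) in (vnorm c ^+ 2)^-1 *: c.

Definition augment (F : 'M[R]_(3,2)) (b : 'cV[R]_3) : 'M[R]_3 :=
  \matrix_(i < 3, j < 3)
    (if (j : nat) == 0%N then F i i0 else if (j : nat) == 1%N then F i i1 else b i 0).

Definition Lstep (t : R) (v : 'cV[R]_3) : 'M[R]_3 :=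
  (powR (t + 1) (- 3%:R^-1)) *: (1%:M + t *: (v *m v^T)).

Definition W3D (s s0 : R) (m : 'cV[R]_2) (G : 'M[R]_3) : R :=
  let m3 := embed3 m in
  let Gm := G *m m3 in
  let n := (vnorm Gm)^-1 *: Gm in
  \tr (G^T *m invmx (Lstep s n) *m G *m Lstep s0 m3) - 3%:R.

Definition Imat (F : 'M[R]_(3,2)) : 'M[R]_2 := F^T *m F.
Definition Jdet (F : 'M[R]_(3,2)) : R := \det (Imat F).
Definition Cm (m : 'cV[R]_2) (F : 'M[R]_(3,2)) : R := (m^T *m Imat F *m m) 0 0.

Definition lam (s s0 : R) : R := powR ((s + 1) / (s0 + 1)) 3%:R^-1.

Definition Wstr (s s0 : R) (m : 'cV[R]_2) (F : 'M[R]_(3,2)) : R :=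
  lam s s0 * ((Jdet F)^-1 + (s + 1)^-1 *
     (\tr (Imat F) + s0 * Cm m F + s * (Jdet F / Cm m F))) - 3%:R.

End Defs.

(* Main.v *)
Require Import Defs.
From HB Require Import structures.
From mathcomp Require Import all_boot all_order all_algebra.
From mathcomp Require Import reals exp.
From mathcomp Require Import ring lra.
Import Order.TTheory GRing.Theory Num.Theory.
Local Open Scope ring_scope.

Lemma sq0 (R : realType) n (u : 'rV[R]_n) : (u *m u^T) 0 0 = 0 -> u = 0.
Proof.
rewrite mxE => /eqP; rewrite psumr_eq0; last by move=> i _; rewrite mxE -expr2 sqr_ge0.
move=> /allP H; apply/rowP => j; rewrite mxE.
have := H j (mem_index_enum _); rewrite mxE /= -expr2 sqrf_eq0 => /eqP //.
Qed.

Lemma nondeg (R : realType) (F : 'M[R]_(3,2)) (hF : \rank F = 2%N) (v : 'rV[R]_2) :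
  (v *m F^T *m (v *m F^T)^T) 0 0 = 0 -> v = 0.
Proof.
move=> /sq0 /eqP; rewrite mulmx_free_eq0; first by move/eqP.
by rewrite /row_free mxrank_tr hF.
Qed.

Lemma Cnz (R : realType) (m : 'cV[R]_2) (F : 'M[R]_(3,2)) (hF : \rank F = 2%N)
  (hm : m i0 0 ^+ 2 + m i1 0 ^+ 2 = 1) : Cm m F != 0.
Proof.
apply/eqP => H.
have : m^T = 0.
  by apply: (nondeg _ _ hF); rewrite -H /Cm /Imat trmx_mul !trmxK !mulmxA.
move/matrixP => E; move: hm; have := E 0 i0; have := E 0 i1; rewrite !mxE => -> ->.
by rewrite expr0n /= addr0 => /eqP; rewrite eq_sym oner_eq0.
Qed.

Lemma Jnz (R : realType) (F : 'M[R]_(3,2)) (hF : \rank F = 2%N) : Jdet F != 0.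
Proof.
apply/negP => /det0P [v vn0 vA]; case/negP: vn0; apply/eqP/(nondeg _ _ hF).
by rewrite trmx_mul trmxK !mulmxA -(mulmxA v) -/(Imat F) vA mul0mx mxE.
Qed.

Lemma inv_Lstep (R : realType) (a s : R) (n : 'cV[R]_3) : a != 0 -> s + 1 != 0 ->
  n^T *m n = 1%:M ->
  invmx (a *: (1%:M + s *: (n *m n^T))) = a^-1 *: (1%:M - (s/(s+1)) *: (n *m n^T)).
Proof.
move=> a0 s0 nn.
have NN : (n *m n^T) *m (n *m n^T) = n *m n^T by rewrite mulmxA -(mulmxA n) nn mulmx1.
have P : (a *: (1%:M + s *: (n *m n^T))) *m (a^-1 *: (1%:M - (s/(s+1)) *: (n *m n^T))) = 1%:M.
  rewrite -scalemxAl -scalemxAr scalerA mulfV // scale1r.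
  rewrite mulmxDl mulmxBr mulmxBr !mul1mx mulmx1 -!scalemxAl -!scalemxAr NN scalerA.
  apply/matrixP => i j; rewrite !mxE; field.
  exact s0.
have [uA _] := mulmx1_unit P.
by rewrite -[RHS](mulKmx uA) P mulmx1.
Qed.

Lemma det2 (R : realType) (A : 'M[R]_2) : \det A = A 0 0 * A 1 1 - A 0 1 * A 1 0.
Proof.
rewrite (expand_det_row _ 0) !big_ord_recr big_ord0 /cofactor !det_mx11 /= !mxE.
rewrite add0r /=.
have e1 : widen_ord (leqnSn 1) ord_max = 0 :> 'I_2 by apply/val_inj.
have e2 : lift 0 0 = 1 :> 'I_2 by apply/val_inj.
have e3 : lift 1 0 = 0 :> 'I_2 by apply/val_inj.
have e4 : ord_max = 1 :> 'I_2 by apply/val_inj.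
rewrite e1 e2 e4 e3 expr0 expr1; ring.
Qed.

Lemma powR_invx (R : realType) (x r : R) : 0 <= x -> powR x (- r) = powR (x^-1) r.
Proof.
move=> x0; rewrite -powR_inv1 // -powRrM mulN1r //.
Qed.

Lemma lam_eq (R : realType) (s s0 : R) : -1 < s -> -1 < s0 ->
  lam s s0 = (powR (s+1) (- 3%:R^-1))^-1 * powR (s0+1) (- 3%:R^-1).
Proof.
move=> hs hs0.
have h1 : 0 <= s + 1 by lra.
have h2 : 0 <= s0 + 1 by lra.
rewrite /lam powRN invrK powRM // ?invr_ge0 // powR_invx //.
Qed.

Lemma tr11 (R : realType) (A : 'M[R]_1) : \tr A = A 0 0.
Proof. by rewrite /mxtrace big_ord1. Qed.

Lemma tr_rank1 (R : realType) (Q : 'M[R]_3) (x y : 'cV[R]_3) :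
  \tr (Q *m (x *m y^T)) = (y^T *m Q *m x) 0 0.
Proof. by rewrite mulmxA mxtrace_mulC tr11 mulmxA. Qed.

Lemma tr_expand (R : realType) (G : 'M[R]_3) (v : 'cV[R]_3) (a b t u : R) :
  \tr (G^T *m (a *: (1%:M - t *: ((G *m v) *m (G *m v)^T))) *m G *m (b *: (1%:M + u *: (v *m v^T))))
  = a * b * (\tr (G^T *m G) + u * ((G *m v)^T *m (G *m v)) 0 0
     - t * ((G^T *m (G *m v))^T *m (G^T *m (G *m v))) 0 0
     - t * u * ((G *m v)^T *m (G *m v)) 0 0 ^+ 2).
Proof.
set w := G *m v; set z := G^T *m w.
have E1 : G^T *m (a *: (1%:M - t *: (w *m w^T))) *m G = a *: (G^T *m G + (- t) *: (z *m z^T)).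
  rewrite -scalemxAr -scalemxAl mulmxBr mulmx1 mulmxBl -scalemxAr -scalemxAl.
  by rewrite scaleNr /z /w !trmx_mul trmxK !mulmxA.
rewrite E1 -scalemxAr -scalemxAl scalerA mxtraceZ mulmxDr mulmx1 -scalemxAr.
rewrite mulmxDl -scalemxAl !(mxtraceD, mxtraceZ).
rewrite !tr_rank1.
have h1 : v^T *m (G^T *m G) *m v = w^T *m w by rewrite /w trmx_mul !mulmxA.
have h2 : v^T *m z = w^T *m w by rewrite /z /w trmx_mul !mulmxA.
have h3 : z^T *m v = w^T *m w by rewrite /z trmx_mul trmxK -mulmxA.
rewrite h1 (mulmxA v^T z z^T) h2 -(mulmxA _ z^T v) h3.
rewrite [\tr (z *m _)]mxtrace_mulC tr11 [((w^T *m w) *m _) 0 0]mxE big_ord1.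
ring.
Qed.

Lemma matrix_nat (R : realType) m n (A : 'M[R]_(m.+1, n.+1)) :
  A = \matrix_(i, j) A (inord (nat_of_ord i)) (inord (nat_of_ord j)).
Proof. by apply/matrixP => i j; rewrite mxE !inord_val. Qed.
Arguments matrix_nat {R m n} A.

Ltac expand := do 4!rewrite ?(mxE, big_ord_recr, big_ord0) /=; rewrite ?inordK //.

Lemma Gm_eq (R : realType) (F : 'M[R]_(3,2)) (b : 'cV[R]_3) (m : 'cV[R]_2) :
  augment F b *m embed3 m = F *m m.
Proof.
apply/matrixP => i j; rewrite ord1 (matrix_nat F) (matrix_nat m) (matrix_nat b).
rewrite /augment /embed3 /i0 /i1.
expand; ring.
Qed.

Lemma GGt (R : realType) (F : 'M[R]_(3,2)) (b : 'cV[R]_3) :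
  augment F b *m (augment F b)^T = F *m F^T + b *m b^T.
Proof.
apply/matrixP => i j; rewrite (matrix_nat F) (matrix_nat b).
rewrite /augment /i0 /i1.
expand; ring.
Qed.

Lemma Ftc (R : realType) (F : 'M[R]_(3,2)) :
  F^T *m crossv (col i0 F) (col i1 F) = 0.
Proof.
apply/matrixP => i j; rewrite ord1 (matrix_nat F) /crossv /i0 /i1.
case: i => [[|[|//]] Hi]; expand; ring.
Qed.

Lemma ctc (R : realType) (F : 'M[R]_(3,2)) :
  ((crossv (col i0 F) (col i1 F))^T *m crossv (col i0 F) (col i1 F)) 0 0 = Jdet F.
Proof.
rewrite /Jdet det2 /Imat (matrix_nat F) /crossv /i0 /i1.
expand; ring.
Qed.

Lemma CH2 (R : realType) (A : 'M[R]_2) (m : 'cV[R]_2) :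
  \tr A * (m^T *m A *m m) 0 0 = (m^T *m A *m A *m m) 0 0 + \det A * (m^T *m m) 0 0.
Proof.
rewrite det2 (matrix_nat A) (matrix_nat m) /mxtrace.
expand; ring.
Qed.

Lemma trZ (R : realType) m n (k : R) (A : 'M[R]_(m, n)) : (k *: A)^T = k *: A^T.
Proof. by apply/matrixP => i j; rewrite !mxE. Qed.

Lemma vnorm_sq (R : realType) (v : 'cV[R]_3) : vnorm v ^+ 2 = (v^T *m v) 0 0.
Proof.
rewrite /vnorm sqr_sqrtr; last by apply: sumr_ge0 => i _; rewrite sqr_ge0.
by rewrite mxE; apply: eq_bigr => i _; rewrite mxE expr2.
Qed.

Lemma mtm (R : realType) (m : 'cV[R]_2) : (m^T *m m) 0 0 = m i0 0 ^+ 2 + m i1 0 ^+ 2.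
Proof. rewrite (matrix_nat m) /i0 /i1; expand; ring. Qed.

Theorem lemma2p1 (R : realType) (s s0 : R) (m : 'cV[R]_2) (F : 'M[R]_(3,2))
  (hs : -1 < s) (hs0 : -1 < s0)
  (hm : m i0 0 ^+ 2 + m i1 0 ^+ 2 = 1)
  (hF : \rank F = 2%N) :
  Wstr s s0 m F = W3D s s0 m (augment F (bvec F)).
Proof.
have Cn := Cnz _ _ _ hF hm.
have Jn := Jnz _ _ hF.
rewrite /W3D /Wstr lam_eq //.
set a := powR (s + 1) (- 3%:R^-1).
set b := powR (s0 + 1) (- 3%:R^-1).
have a0 : a != 0 by rewrite /a powR_eq0 negb_and; apply/orP; left; apply/eqP; lra.
set G := augment F (bvec F).
set m3 := embed3 m.
set Gm := G *m m3.
have GmE : Gm = F *m m by rewrite /Gm /G Gm_eq.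
have hV : vnorm Gm ^+ 2 = Cm m F by rewrite vnorm_sq GmE /Cm /Imat trmx_mul !mulmxA.
have Vn : vnorm Gm != 0 by apply: contra Cn => /eqP V0; rewrite -hV V0 expr0n.
set k := (vnorm Gm)^-1.
have kk : k * k = (Cm m F)^-1 by rewrite /k -expr2 exprVn hV.
have nn : (k *: Gm)^T *m (k *: Gm) = 1%:M.
  rewrite trZ -scalemxAl -scalemxAr scalerA kk (mx11_scalar (Gm^T *m Gm)) -vnorm_sq hV.
  by rewrite scale_scalar_mx mulVf.
rewrite /Lstep -/a -/b inv_Lstep //; last by apply/eqP; lra.
have -> : (k *: Gm) *m (k *: Gm)^T = (Cm m F)^-1 *: (Gm *m Gm^T).
  by rewrite trZ -scalemxAl -scalemxAr scalerA kk.
rewrite scalerA /Gm tr_expand -/Gm GmE.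
have e1 : ((F *m m)^T *m (F *m m)) 0 0 = Cm m F by rewrite /Cm /Imat trmx_mul !mulmxA.
set c := crossv (col i0 F) (col i1 F).
have hb : bvec F = (Jdet F)^-1 *: c by rewrite /bvec /= -/c vnorm_sq ctc.
have Fc : (F *m m)^T *m c = 0 by rewrite trmx_mul -mulmxA Ftc mulmx0.
have e2 : ((G^T *m (F *m m))^T *m (G^T *m (F *m m))) 0 0 = (m^T *m Imat F *m Imat F *m m) 0 0.
  rewrite trmx_mul trmxK mulmxA -(mulmxA _ G G^T) /G GGt hb mulmxDr mulmxDl.
  rewrite trZ -scalemxAl -scalemxAr !mulmxA Fc !mul0mx scaler0 !mul0mx addr0.
  by rewrite /Imat trmx_mul.
have e3 : \tr (G^T *m G) = \tr (Imat F) + (Jdet F)^-1.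
  rewrite mxtrace_mulC /G GGt mxtraceD /Imat [\tr (F *m _)]mxtrace_mulC hb trZ.
  rewrite -scalemxAl -scalemxAr scalerA mxtraceZ [\tr (c *m _)]mxtrace_mulC tr11 ctc.
  by rewrite -mulrA mulVf ?mulr1.
have ch := CH2 _ (Imat F) m.
rewrite mtm hm mulr1 -/(Jdet F) -/(Cm m F) in ch.
rewrite e1 e2 e3.
move: ch Cn Jn; set C := Cm m F; set J := Jdet F; set T := \tr (Imat F); set Q := (_ 0 0).
move=> ch Cn Jn.
have -> : Q = T * C - J by rewrite ch; ring.
field.
have s1 : 0 < s + 1 by lra.
by rewrite Cn Jn a0 (lt0r_neq0 s1).
Qed.
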